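(* Let $1\le p\le 2$, let $\rho>0$ and $\alpha\ge 0$ with $\alpha\le\frac{\pi}{2}-3\rho$, and set $\theta_2=\frac{\pi}{2}+\rho$, $\theta_3=2\rho+\alpha$. Define $E_p(\theta)=|\cos(\theta-\theta_2)|^p+|\cos(\theta-\theta_3)|^p$. Then for every $\theta=2\rho+\alpha+\beta$ with $0\le\beta\le\frac{\pi}{2}-3\rho-\alpha$ we have $E_p(\theta)\ge 1$. *)

(* Defs.v *)
From Stdlib Require Import Reals.
Open Scope R_scope.

(* |x|^p for real exponent p > 0, with the convention 0^p = 0. *)
Definition abspow (x p : R) : R :=
  if Req_EM_T x 0 then 0 else Rpower (Rabs x) p.

Definition Ep (p theta2 theta3 theta : R) : R :=
  abspow (cos (theta - theta2)) p + abspow (cos (theta - theta3)) p.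

(* Main.v *)
Require Import Defs.
From Stdlib Require Import Reals Lra.
Open Scope R_scope.


Lemma abspow_ge_sq (x p : R) : 0 <= x <= 1 -> p <= 2 -> x ^ 2 <= abspow x p.
Proof.
  intros [h0 h1] hp. unfold abspow.
  destruct (Req_EM_T x 0) as [e|ne].
  - subst. simpl. lra.
  - assert (hx : 0 < x) by lra.
    rewrite Rabs_pos_eq by lra.
    rewrite <- (Rpower_pow 2 x hx). unfold Rpower.
    assert (hl : ln x <= 0).
    { rewrite <- ln_1. destruct (Rle_lt_or_eq_dec _ _ h1) as [l|l].
      - left. apply ln_increasing; lra.
      - rewrite l; lra. }
    assert (INR 2 * ln x <= p * ln x).
    { simpl. nra. }
    destruct (Rle_lt_or_eq_dec _ _ H) as [h|h].
    + left. apply exp_increasing. exact h.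
    + rewrite h. lra.
Qed.

Theorem lemma2p11 (p rho alpha beta : R)
  (hp1 : 1 <= p) (hp2 : p <= 2)
  (hrho : 0 < rho) (halpha0 : 0 <= alpha) (halpha : alpha <= PI / 2 - 3 * rho)
  (hbeta0 : 0 <= beta) (hbeta : beta <= PI / 2 - 3 * rho - alpha) :
  Ep p (PI / 2 + rho) (2 * rho + alpha) (2 * rho + alpha + beta) >= 1.
Proof.
  unfold Ep.
  set (y := rho + alpha + beta).
  replace (2 * rho + alpha + beta - (PI / 2 + rho)) with (y - PI / 2) by (unfold y; ring).
  replace (2 * rho + alpha + beta - (2 * rho + alpha)) with beta by ring.
  rewrite cos_minus, cos_PI2, sin_PI2.
  replace (cos y * 0 + sin y * 1) with (sin y) by ring.
  assert (hPI : 0 < PI) by apply PI_RGT_0.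
  assert (hy0 : 0 <= y) by (unfold y; lra).
  assert (hy1 : y <= PI / 2) by (unfold y; lra).
  assert (hb1 : beta <= PI / 2) by lra.
  assert (hsb : sin beta <= sin y).
  { apply sin_incr_1; unfold y in *; lra. }
  assert (0 <= sin beta) by (apply sin_ge_0; lra).
  assert (0 <= cos beta) by (apply cos_ge_0; lra).
  assert (sin y <= 1) by (apply SIN_bound).
  assert (cos beta <= 1) by (apply COS_bound).
  assert (h1 := abspow_ge_sq (sin y) p ltac:(lra) hp2).
  assert (h2 := abspow_ge_sq (cos beta) p ltac:(lra) hp2).
  assert (h3 := sin2_cos2 beta). unfold Rsqr in h3.
  assert (sin beta ^ 2 <= sin y ^ 2) by nra.
  simpl in *. lra.
Qed.
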